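(* Let $c$ be a real number with $2<c<4$. There exists $k_0(c)$ such that for all integers $k>k_0(c)$ for which $n=ck$ is an integer, the family $$\mathcal A_k(n,k)=\Big\{A\in\binom{[n]}{k}: 1\in A,\ A\cap[2,k+1]\neq\varnothing\Big\}\cup\{[2,k+1]\}$$ is intersecting and satisfies $$|\mathcal D(\mathcal A_k(n,k))|>\sum_{0\le\ell<k}\binom{n-1}{\ell}.$$
   Context: $[n]=\{1,\dots,n\}$, $[a,b]=\{a,a+1,\dots,b\}$; $\binom{[n]}{k}$ is the family of all $k$-element subsets of $[n]$. $\mathcal D(\mathcal F):=\{F\setminus F' : F,F'\in\mathcal F\}$. *)

(* Defs.v *)
From HB Require Import structures.
From mathcomp Require Import all_boot all_order all_algebra.
From mathcomp Require Import reals.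
Set Implicit Arguments. Unset Strict Implicit. Unset Printing Implicit Defensive.

(* The ground set [n] = {1,...,n} is modelled inside 'I_n.+1 = {0,...,n}
   as the elements i with 0 < i. *)
Definition ground (n : nat) : {set 'I_n.+1} := [set i : 'I_n.+1 | 0 < i].

Definition one_elt (n : nat) : 'I_n.+1 := inord 1.

Definition intv (n a b : nat) : {set 'I_n.+1} :=
  [set i : 'I_n.+1 | (0 < i) && (a <= i) && (i <= b)].

Definition ksets (n k : nat) : {set {set 'I_n.+1}} :=
  [set A : {set 'I_n.+1} | (A \subset ground n) && (#|A| == k)].

Definition Akfam (n k : nat) : {set {set 'I_n.+1}} :=
  [set A in ksets n k | (one_elt n \in A) && (A :&: intv n 2 k.+1 != set0)]
  :|: [set intv n 2 k.+1].

Definition diffs (n : nat) (F : {set {set 'I_n.+1}}) : {set {set 'I_n.+1}} :=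
  [set A :\: B | A in F, B in F].

Definition intersecting (n : nat) (F : {set {set 'I_n.+1}}) : Prop :=
  forall A B, A \in F -> B \in F -> A :&: B != set0.

(* Main.v *)
Require Import Defs.
From HB Require Import structures.
From mathcomp Require Import all_boot all_order all_algebra.
From mathcomp Require Import reals.
From mathcomp Require Import zify ring lra.
Import Order.TTheory GRing.Theory Num.Theory.

Module Aux.
Set Implicit Arguments. Unset Strict Implicit. Unset Printing Implicit Defensive.

Lemma card_intv n a b : 0 < a -> b <= n -> #|intv n a b| = b.+1 - a.
Proof.
move=> a0 bn.
rewrite -sum1_card big_mkcond /=.
have ->: \sum_(i < n.+1) (if i \in intv n a b then 1 else 0) =
  \sum_(i < n.+1) (if (0 < i) && (a <= i) && (i <= b) then 1 else 0).
  by apply: eq_bigr => i _; rewrite inE.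
rewrite -(big_mkord xpredT (fun i => if (0 < i) && (a <= i) && (i <= b) then 1 else 0)).
case: (leqP a b) => ab; last first.
  rewrite big1_seq; first by apply/esym/eqP; rewrite subn_eq0.
  move=> i _ /=; case: ifP => // /andP[/andP[_ h1] h2].
  by have := leq_trans h1 h2; rewrite leqNgt ab.
rewrite (big_cat_nat (n:=a)) //=; last by apply: leq_trans ab _; apply: leq_trans bn _.
rewrite big1_seq ?add0n; last first.
  move=> i /=; rewrite mem_index_iota => /andP[_ ia].
  by rewrite (leqNgt a i) ia andbF.
rewrite (big_cat_nat (n:=b.+1)) //=; last by apply: leqW.
rewrite [X in _ + X]big1_seq ?addn0; last first.
  move=> i /=; rewrite mem_index_iota => /andP[bi _].
  by rewrite (leqNgt i b) bi andbF.
rewrite big_seq_cond (eq_bigr (fun _ => 1)); last first.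
  move=> i; rewrite mem_index_iota andbT => /andP[ai ib].
  by rewrite (leq_trans a0 ai) ai -ltnS ib.
by rewrite -big_seq_cond sum_nat_const_nat muln1.
Qed.

Lemma exists_sub (T : finType) (X : {set T}) s : s <= #|X| ->
  exists Y : {set T}, Y \subset X /\ #|Y| = s.
Proof.
move=> sX.
have : 0 < #|[set A : {set T} | A \subset X & #|A| == s]| by rewrite cards_draws bin_gt0.
case/card_gt0P => Y; rewrite inE => /andP[YX /eqP YS]; by exists Y.
Qed.

Lemma ar_hW k n x : 1 < k -> 2 * k <= n -> x <= k -> k - 2 <= n.-1 - x.
Proof. lia. Qed.
Lemma ar_cA' k : 1 < k -> 1 + (1 + (k - 2)) = k.
Proof. lia. Qed.
Lemma ar_cA k s : s <= k - 2 -> 1 + (1 + (s + (k - 2 - s))) = k - 2 + 2.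
Proof. lia. Qed.
Lemma ar_eT k s : s < k -> k - 2 < s -> 1 < k -> s = k.-1.
Proof. lia. Qed.
Lemma ar_cA2 k : 1 < k -> 1 + k.-1 = k.
Proof. lia. Qed.
Lemma ar_k2 k : 1 < k -> k - 2 + 2 = k.
Proof. lia. Qed.

Lemma ar_cA3 k s : 1 < k -> s < k.-1 -> 1 + (s + (k.-1 - s)) = k.
Proof. lia. Qed.

Lemma cardU_disj (U : finType) (A B : {set U}) : A :&: B = set0 -> #|A :|: B| = #|A| + #|B|.
Proof. by move=> h; rewrite cardsU h cards0 subn0. Qed.

Section Comb.
Variables n k : nat.
Hypothesis hk : 2 <= k.
Hypothesis hn : 2 * k <= n.

Local Notation I := 'I_n.+1.
Local Notation one := (one_elt n).
Local Notation B0 := (intv n 2 k.+1).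
Local Notation G := (intv n 2 n).
Local Notation Y := (intv n k.+2 n).

Lemma val_one : val one = 1.
Proof. rewrite /one_elt /= inordK //; lia. Qed.

Lemma one_notin a b : 1 < a -> one \notin intv n a b.
Proof. move=> ha; rewrite inE val_one; apply/negP => /andP[/andP[_ h] _]; lia. Qed.

Lemma intv_ground a b : intv n a b \subset ground n.
Proof. by apply/subsetP => x; rewrite !inE => /andP[/andP[-> _] _]. Qed.

Lemma one_ground : one \in ground n.
Proof. by rewrite inE val_one. Qed.

Lemma cardB0 : #|B0| = k.
Proof. rewrite card_intv //; lia. Qed.
Lemma cardG : #|G| = n.-1.
Proof. rewrite card_intv //; lia. Qed.
Lemma cardY : #|Y| = n - k.+1.
Proof. rewrite card_intv //; lia. Qed.

Lemma B0G : B0 \subset G.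
Proof. apply/subsetP => x; rewrite !inE => /andP[/andP[-> ->] h] /=.
have := ltn_ord x; lia. Qed.
Lemma YG : Y \subset G.
Proof. apply/subsetP => x; rewrite !inE => /andP[/andP[-> h] ->] /=; lia. Qed.
Lemma GnY x : x \in G -> x \notin Y -> x \in B0.
Proof. rewrite !inE => /andP[/andP[-> h] h2] /=; lia. Qed.
Lemma B0nY x : x \in B0 -> x \notin Y.
Proof. rewrite !inE => /andP[/andP[_ h] h2] /=; lia. Qed.

Lemma inAk (A : {set I}) x : A \subset ground n -> #|A| = k -> one \in A ->
  x \in A -> x \in B0 -> A \in Akfam n k.
Proof.
move=> Ag Ak oA xA xB; rewrite /Akfam inE; apply/orP; left.
rewrite inE /ksets inE Ag Ak eqxx oA /=.
by apply/set0Pn; exists x; rewrite inE xA.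
Qed.

Lemma B0Ak : B0 \in Akfam n k.
Proof. by rewrite /Akfam inE; apply/orP; right; rewrite inE. Qed.

Lemma diffs_in (A A' : {set I}) : A \in Akfam n k -> A' \in Akfam n k ->
  A :\: A' \in diffs (Akfam n k).
Proof. by move=> h1 h2; apply/imset2P; exists A A'. Qed.


Lemma memP (T : {set I}) : T \subset G -> #|T| < k ->
  ~~ ((T \subset Y) && (#|T| == k.-1)) -> T \in diffs (Akfam n k).
Proof.
move=> TG Ts hQ.
have : ~~ (B0 \subset T).
  by apply/negP => /subset_leq_card; rewrite cardB0 leqNgt Ts.
case/subsetPn => b bB bT.
set W := G :\: (b |: T).
have hW : k - 2 <= #|W|.
  rewrite /W cardsD cardG.
  have : #|G :&: (b |: T)| <= k.
    apply: leq_trans (subset_leq_card (subsetIr _ _)) _.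
    by rewrite cardsU1 bT add1n.
  exact: ar_hW.
case: (exists_sub hW) => F' [F'W cF'].
have oG : one \notin G by apply: one_notin.
have oB : one \notin B0 by apply: one_notin.
have oT : one \notin T by apply/negP => /(subsetP TG); apply/negP.
have FG : F' \subset G by apply: subset_trans F'W _; apply: subsetDl.
have oF : one \notin F' by apply/negP => /(subsetP FG); apply/negP.
have bF : b \notin F'.
  by apply/negP => /(subsetP F'W); rewrite inE setU11.
have FT x : x \in F' -> x \notin T.
  by move/(subsetP F'W); rewrite !inE negb_or => /andP[/andP[_ ->]].
have TF x : x \in T -> x \notin F'.
  by move=> xT; apply/negP => /FT; rewrite xT.
have ob : one != b by apply/negP => /eqP ob; move: oB; rewrite ob bB.
set A' := one |: (b |: F').
have A'g : A' \subset ground n.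
  rewrite /A' !subUset !sub1set one_ground.
  rewrite (subsetP (intv_ground 2 k.+1)) //=.
  exact: subset_trans FG (intv_ground _ _).
have cA' : #|A'| = k.
  rewrite /A' cardsU1 cardsU1 bF cF' in_setU1 negb_or ob oF /=; exact: ar_cA' hk.
have A'Ak : A' \in Akfam n k.
  by apply: (inAk (x:=b)) => //; rewrite /A' !inE eqxx ?orbT.
have [small|big] := leqP #|T| (k - 2).
- have hF : k - 2 - #|T| <= #|F'| by rewrite cF' leq_subr.
  case: (exists_sub hF) => H' [H'F cH'].
  have TH : T :&: H' = set0.
    apply/setP => x; rewrite !inE; apply/negP => /andP[xT /(subsetP H'F) /FT].
    by rewrite xT.
  set A := one |: (b |: (T :|: H')).
  have Ag : A \subset ground n.
    rewrite /A !subUset !sub1set one_ground.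
    rewrite (subsetP (intv_ground 2 k.+1)) //=.
    rewrite (subset_trans TG (intv_ground _ _)) /=.
    exact: subset_trans H'F (subset_trans FG (intv_ground _ _)).
  have cA : #|A| = k.
    rewrite /A cardsU1 cardsU1 cardU_disj // cH'.
    have -> : b \notin T :|: H'.
      by rewrite inE negb_or bT; apply/negP => /(subsetP H'F); apply/negP.
    have -> : one \notin b |: (T :|: H').
      rewrite !inE !negb_or ob oT /=; apply/negP => /(subsetP H'F); apply/negP.
      exact: oF.
    by rewrite /= ar_cA // ar_k2.
  have AAk : A \in Akfam n k.
    by apply: (inAk (x:=b)) => //; rewrite /A !inE eqxx ?orbT.
  have -> : T = A :\: A'.
    apply/setP => x; rewrite /A /A' !inE.
    case: (boolP (x \in T)) => xT /=.
    + have -> : (x == one) = false by apply/negP => /eqP e; move: oT; rewrite -e xT.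
      have -> : (x == b) = false by apply/negP => /eqP e; move: bT; rewrite -e xT.
      by rewrite (negbTE (TF x xT)).
    + case hH: (x \in H').
        by rewrite (subsetP H'F x hH) !orbT.
      by rewrite orbF; case: (x =P one) => _; case: (x =P b) => _ /=; rewrite ?andbF.
  exact: diffs_in.
- have eT : #|T| = k.-1 by apply: ar_eT.
  have : ~~ (T \subset Y) by move: hQ; rewrite eT eqxx andbT.
  case/subsetPn => x0 x0T x0Y.
  have x0B : x0 \in B0 by apply: GnY => //; apply: (subsetP TG).
  set A := one |: T.
  have Ag : A \subset ground n.
    by rewrite /A subUset sub1set one_ground (subset_trans TG (intv_ground _ _)).
  have cA : #|A| = k by rewrite /A cardsU1 oT eT; exact: ar_cA2.
  have AAk : A \in Akfam n k.
    by apply: (inAk (x:=x0)) => //; rewrite /A !inE ?eqxx ?x0T ?orbT.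
  have -> : T = A :\: A'.
    apply/setP => x; rewrite /A /A' !inE.
    case: (boolP (x \in T)) => xT /=.
    + have -> : (x == one) = false by apply/negP => /eqP e; move: oT; rewrite -e xT.
      have -> : (x == b) = false by apply/negP => /eqP e; move: bT; rewrite -e xT.
      by rewrite (negbTE (TF x xT)).
      by case: (x =P one) => _; case: (x =P b) => _ /=; rewrite ?andbF.
  exact: diffs_in.
Qed.


Lemma memR (T : {set I}) : T \subset Y -> #|T| < k.-1 ->
  one |: T \in diffs (Akfam n k).
Proof.
move=> TY Ts.
have hH : k.-1 - #|T| <= #|B0| by rewrite cardB0; apply: leq_trans (leq_subr _ _) (leq_pred _).
case: (exists_sub hH) => H [HB cH].
have oB : one \notin B0 by apply: one_notin.
have oY : one \notin Y by apply: one_notin.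
have oT : one \notin T by apply/negP => /(subsetP TY); apply/negP.
have oH : one \notin H by apply/negP => /(subsetP HB); apply/negP.
have TB x : x \in T -> x \notin B0.
  by move=> xT; apply/negP => /B0nY; rewrite (subsetP TY x xT).
have TH : T :&: H = set0.
  apply/setP => x; rewrite !inE; apply/negP => /andP[/TB xB /(subsetP HB)].
  by rewrite (negbTE xB).
have : 0 < #|H| by rewrite cH subn_gt0.
case/card_gt0P => h hH'.
set A := one |: (T :|: H).
have Ag : A \subset ground n.
  rewrite /A !subUset !sub1set one_ground.
  rewrite (subset_trans TY (intv_ground _ _)) /=.
  exact: subset_trans HB (intv_ground _ _).
have cA : #|A| = k.
  rewrite /A cardsU1 cardU_disj // cH.
  have -> : one \notin T :|: H by rewrite in_setU negb_or oT oH.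
  rewrite /=; exact: ar_cA3 hk Ts.
have AAk : A \in Akfam n k.
  apply: (inAk (x:=h)) => //; last by apply: (subsetP HB).
  + by rewrite /A !inE eqxx.
  + by rewrite /A !inE hH' !orbT.
have -> : one |: T = A :\: B0.
  apply/setP => x; rewrite /A !inE.
  case: (x =P one) => [->|_] /=.
    by move: oB; rewrite inE => /negbTE ->.
  case: (boolP (x \in T)) => xT /=.
    by move: (TB x xT); rewrite inE => ->.
  case hx : (x \in H); last by rewrite andbF.
  by move: (subsetP HB x hx); rewrite inE => ->.
apply: diffs_in; first exact: AAk. exact: B0Ak.
Qed.


Lemma card_small (X : {set I}) s :
  #|[set T : {set I} | T \subset X & #|T| < s]| = \sum_(0 <= l < s) 'C(#|X|, l).
Proof.
elim: s => [|s IH].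
  rewrite big_nil; apply/eqP; rewrite cards_eq0; apply/eqP/setP => T.
  by rewrite !inE ltn0 andbF.
rewrite big_nat_recr //= -IH -cards_draws.
have -> : [set T : {set I} | T \subset X & #|T| < s.+1] =
   [set T : {set I} | T \subset X & #|T| < s] :|: [set T : {set I} | T \subset X & #|T| == s].
  apply/setP => T; rewrite !inE ltnS leq_eqVlt.
  by rewrite andb_orr orbC.
apply: cardU_disj; apply/setP => T; rewrite !inE.
by apply/negP => /andP[/andP[_ h] /andP[_ /eqP e]]; rewrite e ltnn in h.
Qed.

Lemma ar_fin a b q r d : a - b + r <= d -> b <= q -> b <= a -> a + r <= d + q.
Proof. lia. Qed.

Lemma comb_bound :
  \sum_(0 <= l < k) 'C(n.-1, l) + \sum_(0 <= l < k.-1) 'C(n - k.+1, l)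
  <= #|diffs (Akfam n k)| + 'C(n - k.+1, k.-1).
Proof.
set P := [set T : {set I} | T \subset G & #|T| < k].
set Q := [set T : {set I} | T \subset Y & #|T| == k.-1].
set S := [set T : {set I} | T \subset Y & #|T| < k.-1].
set Rs := [set one |: T | T in S].
have cP : #|P| = \sum_(0 <= l < k) 'C(n.-1, l) by rewrite card_small cardG.
have cQ : #|Q| = 'C(n - k.+1, k.-1) by rewrite cards_draws cardY.
have oY : one \notin Y by apply: one_notin.
have oG : one \notin G by apply: one_notin.
have cR : #|Rs| = \sum_(0 <= l < k.-1) 'C(n - k.+1, l).
  rewrite card_in_imset ?card_small ?cardY //.
  move=> T1 T2; rewrite !inE => /andP[T1Y _] /andP[T2Y _] e.
  have h1 : one \notin T1 by apply/negP => /(subsetP T1Y); apply/negP.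
  have h2 : one \notin T2 by apply/negP => /(subsetP T2Y); apply/negP.
  by rewrite -(setU1K h1) e setU1K.
have sub : (P :\: Q) :|: Rs \subset diffs (Akfam n k).
  apply/subsetP => T; rewrite in_setU => /orP[].
  - rewrite !inE => /andP[hnQ /andP[TG Ts]]; exact: memP.
  - case/imsetP => T'; rewrite inE => /andP[TY Ts] ->; exact: memR.
have disj : (P :\: Q) :&: Rs = set0.
  apply/setP => T; rewrite !inE; apply/negP => /andP[/andP[_ /andP[TG _]]].
  case/imsetP => T' _ eT; move: TG; rewrite eT => /subsetP /(_ one).
  by rewrite in_setU1 eqxx /= => /(_ isT); apply/negP.
have := subset_leq_card sub; rewrite cardU_disj // cardsD -cP -cQ -cR => h.
apply: ar_fin h _ _.
- by apply: subset_leq_card; apply: subsetIr.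
- by apply: subset_leq_card; apply: subsetIl.
Qed.


Lemma inter : intersecting (Akfam n k).
Proof.
move=> A B; rewrite /Akfam !in_setU !in_set1.
have hB0 : B0 != set0 by rewrite -card_gt0 cardB0; apply: leq_trans hk.
case/orP => [hA|/eqP ->]; case/orP => [hB|/eqP ->].
- move: hA hB; rewrite !inE => /andP[_ /andP[oA _]] /andP[_ /andP[oB _]].
  by apply/set0Pn; exists one; rewrite inE oA oB.
- by move: hA; rewrite !inE => /andP[_ /andP[_ ->]].
- by rewrite setIC; move: hB; rewrite !inE => /andP[_ /andP[_ ->]].
- by rewrite setIid.
Qed.

End Comb.

Section An1.
Local Open Scope ring_scope.


Lemma bern (R : realType) (r : R) (t : nat) : 0 <= r -> r <= 1 ->
  r ^+ t * (1 + t%:R * (1 - r)) <= 1.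
Proof.
move=> r0 r1; elim: t => [|t IH]; first by rewrite expr0 mul0r addr0 mulr1.
have P0 : 0 <= r ^+ t by apply: exprn_ge0.
have P1 : r ^+ t <= 1 by apply: exprn_ile1.
set P := r ^+ t in P0 P1 IH *.
rewrite exprS -/P.
have h1 : r * (P * (1 + t%:R * (1 - r))) <= r * 1 by apply: ler_wpM2l.
have h2 : P * (r * (1 - r)) <= 1 * (r * (1 - r)).
  apply: ler_wpM2r => //; nra.
rewrite -natr1.
nra.
Qed.

Lemma tele (R : realType) (r : R) (t : nat) :
  (\sum_(1 <= p < t.+1) r ^+ p) * (1 - r) = r - r ^+ t.+1.
Proof.
elim: t => [|t IH]; first by rewrite big_geq // mul0r expr1 subrr.
rewrite big_nat_recr //= mulrDl IH !exprS; ring.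
Qed.

Lemma geo (R : realType) (r : R) : 1/2 < r -> exists t : nat, 1 < \sum_(1 <= p < t.+1) r ^+ p.
Proof.
move=> rh.
have [r1|r1] := leP 1 r.
  exists 2%N; rewrite big_nat_recr //= big_nat_recr //= big_geq // add0r expr1.
  have : 1 <= r ^+ 2 by apply: exprn_ege1.
  lra.
set x := 1 / ((2 * r - 1) * (1 - r)).
exists (Num.trunc x).+1.
have hx : x < (Num.trunc x).+1%:R by apply: truncnS_gt.
set t := (Num.trunc x).+1 in hx *.
have pos : 0 < (2 * r - 1) * (1 - r) by apply: mulr_gt0; lra.
have ht : 1 < t%:R * (1 - r) * (2 * r - 1).
  have : x * ((2 * r - 1) * (1 - r)) < t%:R * ((2 * r - 1) * (1 - r)).
    by rewrite ltr_pM2r.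
  rewrite /x mul1r mulVf ?gt_eqF //.
  move=> h; apply: (lt_le_trans h); rewrite le_eqVlt; apply/orP; left; apply/eqP; ring.
have r0 : 0 < r by lra.
have B := bern t (ltW r0) (ltW r1).
have tp : 0 <= t%:R * (1 - r) :> R by apply: mulr_ge0; [apply: ler0n | lra].
have Pt : r ^+ t.+1 <= r ^+ t by rewrite exprS ler_piMl // ?exprn_ge0 // ltW.
have P0 : 0 <= r ^+ t by apply: exprn_ge0; apply: ltW.
have E := tele r t.
nra.
Qed.

End An1.

Lemma nat1 k i t : (t + 3 <= k)%N -> (i.+1 <= t)%N -> ((k.-1 - i.+1).+1 + i.+1 = k)%N.
Proof. lia. Qed.
Lemma nat2 n k i t : (2 * k < n)%N -> (t + 3 <= k)%N -> (i.+1 <= t)%N ->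
  ((n - k.+1 - (k.-1 - i.+1)) + 2 * k = n + i.+1)%N.
Proof. lia. Qed.
Lemma nat3 k i t : (t + 3 <= k)%N -> (i.+1 <= t)%N -> (k.-1 - i = (k.-1 - i.+1).+1)%N.
Proof. lia. Qed.
Lemma nat4 k i t : (t + 3 <= k)%N -> (i.+1 <= t)%N -> (k.-1 - i.+1 < k.-1)%N.
Proof. lia. Qed.
Lemma nat6 n k i t : (2 * k < n)%N -> (t + 3 <= k)%N -> (i.+1 <= t)%N ->
  (0 < n - k.+1 - (k.-1 - i.+1))%N.
Proof. lia. Qed.




Section An2.
Local Open Scope ring_scope.
Lemma chain (R : realType) (c rho : R) (t k n : nat) :
  0 < rho -> rho * (c - 2) = c / 4 ->
  t%:R * (1 + rho) <= k%:R * (1 - c / 4) ->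
  (t + 3 <= k)%N -> (2 * k < n)%N -> n%:R = c * k%:R ->
  forall i, (i <= t)%N ->
  rho ^+ i * ('C(n - k.+1, k.-1))%:R <= ('C(n - k.+1, k.-1 - i))%:R /\
  ('C(n - k.+1, k.-1))%:R * (\sum_(1 <= p < i.+1) rho ^+ p)
     <= \sum_(k.-1 - i <= l < k.-1) ('C(n - k.+1, l))%:R.
Proof.
move=> r0 rd hk tk kn nc.
elim=> [|i IH] it.
  rewrite expr0 mul1r subn0 big_geq // big_geq // mulr0; split => //.
have [IH1 IH2] := IH (ltnW it).
set m := (n - k.+1)%N.
set u := (k.-1 - i.+1)%N.
have e3 : (k.-1 - i)%N = u.+1 by apply: nat3 tk it.
rewrite e3 in IH1 IH2.
have e1 := nat1 tk it; have e2 := nat2 kn tk it.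
rewrite -/u in e1 e2.
have E1 : (u.+1)%:R = k%:R - (i.+1)%:R :> R by rewrite -e1 natrD addrK.
have E2 : (m - u)%:R = n%:R - 2 * k%:R + (i.+1)%:R :> R.
  have := congr1 (fun x : nat => x%:R : R) e2; rewrite /= !natrD ?natrM => h.
  rewrite /m; lra.
have mb := mul_bin_left m u.
have MB : (u.+1)%:R * ('C(m, u.+1))%:R = (m - u)%:R * ('C(m, u))%:R :> R.
  by rewrite -!natrM mb.
have it' : (i.+1)%:R <= t%:R :> R by rewrite ler_nat.
have key : rho * (m - u)%:R <= (u.+1)%:R.
  rewrite E1 E2 nc.
  have : 0 <= (t%:R - (i.+1)%:R) * (1 + rho) by apply: mulr_ge0; lra.
  have rdk : rho * (c - 2) * k%:R = c / 4 * k%:R by rewrite rd.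
  move: rdk hk; clear; nra.
have X0 : 0 < (m - u)%:R :> R by rewrite ltr0n; apply: nat6 kn tk it.
have C0 : 0 <= ('C(m, u.+1))%:R :> R by apply: ler0n.
have P0 : 0 <= rho ^+ i.+1 by apply: exprn_ge0; apply: ltW.
have part1 : rho ^+ i.+1 * ('C(m, k.-1))%:R <= ('C(m, u))%:R.
  rewrite exprS -mulrA.
  have h1 : rho * (rho ^+ i * ('C(m, k.-1))%:R) <= rho * ('C(m, u.+1))%:R.
    by apply: ler_wpM2l => //; apply: ltW.
  apply: le_trans h1 _.
  have h2 : rho * ('C(m, u.+1))%:R * (m - u)%:R <= ('C(m, u))%:R * (m - u)%:R.
    rewrite mulrC (mulrC ('C(m, u))%:R) -MB mulrA.
    by apply: ler_wpM2r => //; rewrite mulrC.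
  by rewrite ler_pM2r in h2.
split => //.
rewrite big_nat_recr //= mulrDr (big_ltn (nat4 tk it)).
rewrite addrC; apply: lerD => //.
by rewrite mulrC.
Qed.

Lemma nat7 a t k : (a + t + 3 < k)%N -> (t + 3 <= k)%N.
Proof. lia. Qed.
Lemma nat8 a t k : (a + t + 3 < k)%N -> (a.+1 <= k)%N.
Proof. lia. Qed.
Lemma nat9 n k : (2 * k < n)%N -> (k.-1 <= n - k.+1)%N.
Proof. lia. Qed.
Lemma nat10 t k : (t + 3 <= k)%N -> (1 < k)%N.
Proof. lia. Qed.

Lemma key (R : realType) (c : R) : 2 < c -> c < 4 ->
  exists k0 : nat, forall k n : nat, (k0 < k)%N -> n%:R = c * k%:R ->
  [/\ (1 < k)%N, (2 * k < n)%N &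
      ('C(n - k.+1, k.-1) < \sum_(0 <= l < k.-1) 'C(n - k.+1, l))%N].
Proof.
move=> c2 c4.
set rho := c / (4 * (c - 2)).
have d0 : 0 < c - 2 by lra.
have rd : rho * (c - 2) = c / 4.
  by rewrite /rho; field; rewrite gt_eqF.
have rh : 1 / 2 < rho.
  rewrite ltNge; apply/negP => h.
  have : rho * (c - 2) <= 1 / 2 * (c - 2) by apply: ler_wpM2r => //; apply: ltW.
  rewrite rd; lra.
have r0 : 0 < rho by lra.
have [t ht] := geo rh.
set K := t%:R * (1 + rho) / (1 - c / 4).
exists (Num.trunc K + t + 3)%N => k n kk nc.
have tk := nat7 kk.
have Kk : K < k%:R.
  apply: lt_le_trans (truncnS_gt K) _.
  by rewrite ler_nat; apply: nat8 kk.
have hk : t%:R * (1 + rho) <= k%:R * (1 - c / 4).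
  by apply: ltW; rewrite -ltr_pdivrMr //; lra.
have kn : (2 * k < n)%N.
  rewrite -(ltr_nat R) natrM nc.
  have : 0 < k%:R :> R by rewrite ltr0n (leq_trans _ tk) // addnS.
  nra.
have [_ H] := chain r0 rd hk tk kn nc (leqnn t).
split => //; first exact: nat10 tk.
set m := (n - k.+1)%N in H *.
have C0 : 0 < ('C(m, k.-1))%:R :> R by rewrite ltr0n bin_gt0; apply: nat9.
have H2 := lt_le_trans (eqbRL (ltr_pMr _ C0) ht) H.
rewrite -natr_sum ltr_nat in H2.
apply: leq_trans H2 _.
rewrite [X in (_ <= X)%N](big_cat_nat (n := (k.-1 - t)%N)) //=; last by apply: leq_subr.
exact: leq_addl.
Qed.

End An2.

Lemma ar_final a b d c : a + b <= d + c -> c < b -> a < d.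
Proof. lia. Qed.
End Aux.

Theorem mainTheorem10 (R : realType) (c : R) :
  (2 < c)%R -> (c < 4)%R ->
  exists k0 : nat, forall k n : nat, k0 < k -> (n%:R = c * k%:R :> R)%R ->
    intersecting (Akfam n k) /\
    \sum_(0 <= l < k) 'C(n.-1, l) < #|diffs (Akfam n k)|.
Proof.
move=> c2 c4; have [k0 Hk] := Aux.key c2 c4; exists k0 => k n kk nc.
have [k1 kn Hb] := Hk k n kk nc.
have hn : 2 * k <= n by apply: ltnW.
split; first exact: (Aux.inter k1 hn).
exact: (Aux.ar_final (Aux.comb_bound k1 hn) Hb).
Qed.
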